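(* Let $\mathcal{P}$ be a finite poset, $\mathcal{M}_k$ the set of $k$-monotone functions $\mathcal{P}\to\{0,1\}$, and $f\colon\mathcal{P}\to\{0,1\}$. Then $\mathrm{dist}(f,\mathcal{M}_k)=\varepsilon_f$ if and only if the minimum vertex cover of the violation hypergraph of $f$ has size $\varepsilon_f|\mathcal{P}|$.
   Context: $f$ is $k$-monotone if there is no chain $x_1\prec\cdots\prec x_{k+1}$ with $f(x_1)=1$ and $f(x_i)\neq f(x_{i+1})$ for all $i\in[k]$. $\mathrm{dist}(f,\mathcal{M}_k)$ is the minimum over $g\in\mathcal{M}_k$ of the fraction of points of $\mathcal{P}$ where $f\neq g$. The violation hypergraph of $f$ has vertex set $\mathcal{P}$ and a hyperedge $\{x_1,\dots,x_{k+1}\}$ for each chain $x_1\prec\cdots\prec x_{k+1}$ with $f(x_1)=1$ and $f(x_i)\neq f(x_{i+1})$ for all $i\in[k]$. A vertex cover is a set of vertices meeting every hyperedge. *)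

(* Defs.v *)
From HB Require Import structures.
From mathcomp Require Import all_boot all_order all_algebra.
Set Implicit Arguments. Unset Strict Implicit. Unset Printing Implicit Defensive.
Import Order.TTheory GRing.Theory Num.Theory.

(* A finite poset P is a type T : finPOrderType d.  Functions P -> {0,1} are
   T -> bool (true = 1). *)

Section KMono.
Context {d : Order.disp_t} {T : finPOrderType d}.

(* s = [:: x_1; ...; x_(k+1)] is a violating chain for f:
   x_1 < ... < x_(k+1) (strict order), f x_1 = 1, f x_i <> f x_(i+1). *)
Definition viol_chain (k : nat) (f : T -> bool) (s : seq T) : bool :=
  [&& size s == k.+1,
      sorted (fun x y => (x < y)%O) s,
      head false (map f s) &
      sorted (fun a b => a != b) (map f s)].

Definition k_monotone (k : nat) (f : T -> bool) : bool :=
  [forall s : (k.+1).-tuple T, ~~ viol_chain k f s].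

Definition Mk (k : nat) : {set {ffun T -> bool}} :=
  [set g : {ffun T -> bool} | k_monotone k g].

Definition hamming (f g : T -> bool) : nat := #|[set x | f x != g x]|.

Definition dist_Mk (k : nat) (f : T -> bool) : rat :=
  (\big[minn/#|T|]_(g in Mk k) hamming f g)%:R / #|T|%:R.

(* C is a vertex cover of the violation hypergraph of f: it meets every
   hyperedge {x_1,...,x_(k+1)} *)
Definition vertex_cover (k : nat) (f : T -> bool) (C : {set T}) : bool :=
  [forall s : (k.+1).-tuple T, viol_chain k f s ==> has (mem C) s].

(* size of a minimum vertex cover (setT is always a cover) *)
Definition min_vertex_cover (k : nat) (f : T -> bool) : nat :=
  \big[minn/#|T|]_(C : {set T} | vertex_cover k f C) #|C|.

End KMono.

(* Main.v *)
Require Import Defs.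
From HB Require Import structures.
From mathcomp Require Import all_boot all_order all_algebra.
Import Order.TTheory GRing.Theory Num.Theory.

Set Implicit Arguments. Unset Strict Implicit. Unset Printing Implicit Defensive.

Lemma alt_last (b0 : bool) (bs : seq bool) :
  path (fun a b => a != b) b0 bs -> last b0 bs = b0 (+) odd (size bs).
Proof.
elim: bs b0 => [|b bs IH] b0 /=; first by rewrite addbF.
case/andP=> /negPf h /IH ->; case: b0 b h => [] [] //=; by rewrite ?negbK.
Qed.

Section Main.
Context {d : Order.disp_t} {T : finPOrderType d}.
Variables (k : nat) (f : T -> bool) (C : {set T}).
Hypothesis hC : vertex_cover k f C.

Definition valid (s : seq T) : bool :=
  [&& all (fun y => y \notin C) s, sorted (fun x y => (x < y)%O) s,
      head false (map f s) & sorted (fun a b => a != b) (map f s)].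

Definition E (j : 'I_k.+1) (x : T) : bool :=
  [exists t : j.-tuple T, valid t && all (fun y => (y <= x)%O) t].

Definition m (x : T) : nat := \max_(j : 'I_k.+1 | E j x) j.

Lemma noviol s : valid s -> size s <= k.
Proof.
case/and4P=> hall hs hh hn; rewrite leqNgt; apply/negP => hk.
have sz : size (take k.+1 s) == k.+1 by rewrite size_takel.
have := forallP hC (Tuple sz) => /implyP /=.
have vc : viol_chain k f (take k.+1 s).
  have hts : sorted (fun x y => (x < y)%O) (take k.+1 s).
    by apply: take_sorted hs => y x z; apply: lt_trans.
  rewrite /viol_chain sz hts /=.
  rewrite map_take.
  have -> : sorted (fun a b => a != b) (take k.+1 [seq f i | i <- s]).
    by move: hn; rewrite -{1}(cat_take_drop k.+1 [seq f i | i <- s]) => /cat_sorted2[].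
  by case: s hk hh {hn hall hs sz hts} => [|a s] //= _ ->.
move/(_ vc)/hasP => [y /mem_take yin yC].
by move/allP: hall => /(_ y yin) /negP; apply; exact: yC.
Qed.

Lemma Eintro s x : valid s -> all (fun y => (y <= x)%O) s -> size s <= m x.
Proof.
move=> hv ha; have hk := noviol hv.
have sz : size s == Ordinal (n:=k.+1) hk by [].
apply: (@leq_bigmax_cond _ _ (fun j : 'I_k.+1 => nat_of_ord j) (Ordinal (n:=k.+1) hk)).
by apply/existsP; exists (Tuple sz); rewrite /= hv ha.
Qed.

Lemma Eelim x : 0 < m x -> exists s, [&& valid s, all (fun y => (y <= x)%O) s & size s == m x].
Proof.
rewrite /m; case: (pickP (fun j : 'I_k.+1 => E j x)) => [j0 Ej0 | none].
  rewrite (bigop.bigmax_eq_arg j0) //; set j := [arg max_(_ > j0 | _) _] => _.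
  have : E j x by rewrite /j; case: arg_maxnP.
  case/existsP => t /andP[h1 h2]; exists t; by rewrite h1 h2 size_tuple eqxx.
by rewrite big_pred0.
Qed.

Lemma m_mono x y : (x <= y)%O -> m x <= m y.
Proof.
move=> hxy; apply/bigmax_leqP => j /existsP [t /andP[h1 h2]].
rewrite -(size_tuple t); apply: Eintro => //.
by apply/allP => z /(allP h2) hz; apply: le_trans hxy.
Qed.

Lemma m_le x : m x <= k.
Proof. by apply/bigmax_leqP => j _; rewrite -ltnS. Qed.

Lemma valid_last a s : valid (a :: s) -> f (last a s) = odd (size (a :: s)).
Proof.
move=> /and4P[_ _ /= fa hn] /=.
rewrite -last_map alt_last // fa size_map; by case: odd.
Qed.

Lemma parity x : x \notin C -> odd (m x) = f x.
Proof.
move=> xC; case: (posnP (m x)) => [m0 | mpos].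
  rewrite m0 /=; case fx: (f x) => //.
  have : size [:: x] <= m x by apply: Eintro; rewrite /valid /= ?fx ?lexx ?andbT.
  by rewrite m0.
have [s /and3P[hv ha /eqP hs]] := Eelim mpos.
case: s hv ha hs => [|a s] hv ha hs; first by rewrite -hs in mpos.
set y := last a s.
have fy := valid_last hv; rewrite -hs -fy.
case: (eqVneq (f y) (f x)) => // hne; exfalso.
have yin : y \in a :: s by exact: mem_last.
have hyx : (y < x)%O.
  rewrite lt_neqAle (allP ha y yin) andbT; apply/eqP => e; by rewrite e eqxx in hne.
have : size (rcons (a :: s) x) <= m x.
  apply: Eintro; last by rewrite all_rcons lexx ha.
  move: hv; rewrite /valid all_rcons xC /=.
  case/and4P=> -> hs' fa hn; rewrite rcons_path hs' /= hyx fa /=.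
  rewrite map_rcons rcons_path -{1}fa hn /= -fa last_map; exact: hne.
by rewrite size_rcons hs ltnn.
Qed.

Definition gC : {ffun T -> bool} := [ffun x => odd (m x)].

Lemma chain_m x s : path (fun a b => (a < b)%O) x s ->
  path (fun a b => a != b) (gC x) (map gC s) -> m x + size s <= m (last x s).
Proof.
elim: s x => [|y s IH] x /=; first by rewrite addn0.
case/andP=> hxy hp /andP[hg hg']; apply: leq_trans (IH y hp hg').
rewrite addnS -addSn leq_add2r ltn_neqAle m_mono ?ltW // andbT.
by apply: contra hg; rewrite !ffunE => /eqP ->.
Qed.

Lemma gC_mono : k_monotone k gC.
Proof.
apply/forallP => t; apply/negP; rewrite /viol_chain => /and4P[/eqP hs hsrt hh hn].
case: (tval t) hs hsrt hh hn => [|a s] //= [hs] hsrt hh hn.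
have := chain_m hsrt hn; rewrite hs.
have : 0 < m a by move: hh; rewrite ffunE; case: (m a).
move=> h1 h2; have := leq_trans (leq_add h1 (leqnn k)) h2.
by rewrite add1n ltnNge m_le.
Qed.

Lemma gC_ham : hamming f gC <= #|C|.
Proof.
apply: subset_leq_card; apply/subsetP => x; rewrite inE ffunE.
by apply: contraR => /parity ->; rewrite eqxx.
Qed.

End Main.

Section Main2.
Context {d : Order.disp_t} {T : finPOrderType d}.
Variables (k : nat) (f : T -> bool).

Lemma cover_of (g : {ffun T -> bool}) : g \in Mk k -> vertex_cover k f [set x | f x != g x].
Proof.
rewrite inE => /forallP hg; apply/forallP => t; apply/implyP => hv.
apply/negPn/negP => hn; have := hg t; apply/negP/negPn.
have e : map f t = map g t.
  apply/eq_in_map => x xin; apply/eqP; apply: contraR hn => h.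
  apply/hasP; exists x => //; change (x \in [set x0 | f x0 != g x0]); by rewrite inE.
by move: hv; rewrite /viol_chain e.
Qed.

Lemma minub (I : finType) (P : pred I) (F : I -> nat) n X :
  X <= n -> (forall i, P i -> X <= F i) -> X <= \big[minn/n]_(i | P i) F i.
Proof.
move=> hn hF; elim/big_ind: _ => // a b ha hb; by rewrite leq_min ha hb.
Qed.

Lemma minlb (I : finType) (P : pred I) (F : I -> nat) n i0 :
  P i0 -> \big[minn/n]_(i | P i) F i <= F i0.
Proof.
move=> h; rewrite unlock /=.
have : i0 \in index_enum I by rewrite mem_index_enum.
elim: (index_enum I) => //= a r IH; rewrite inE; case/orP => [/eqP <-|/IH].
  by rewrite h geq_minl.
by move=> hr; case: (P a) => //; apply: leq_trans (geq_minr _ _) hr.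
Qed.

Lemma minle (I : finType) (P : pred I) (F : I -> nat) n :
  \big[minn/n]_(i | P i) F i <= n.
Proof.
rewrite unlock /=; elim: (index_enum I) => //= a r IH.
by case: (P a) => //; apply: leq_trans (geq_minr _ _) IH.
Qed.

Lemma key : \big[minn/#|T|]_(g in Mk k) hamming f g = min_vertex_cover k f.
Proof.
apply/eqP; rewrite eqn_leq; apply/andP; split.
- apply: minub; first exact: minle.
  move=> D hD; have hg : gC k f D \in Mk k by rewrite inE gC_mono.
  apply: leq_trans (minlb _ _ hg) _; exact: gC_ham.
- have hT : vertex_cover k f [set: T].
    by apply/forallP => t; apply/implyP => _; case: t => [[|a s]] //= _; rewrite inE.
  apply: minub; first by apply: leq_trans (minlb _ _ hT) _; rewrite cardsT.
  move=> g hg; exact: (minlb _ _ (cover_of hg)).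
Qed.

End Main2.

Local Open Scope ring_scope.

Theorem lemmaB9 (d : Order.disp_t) (T : finPOrderType d) (k : nat)
    (f : T -> bool) (eps : rat) (hP : (0 < #|T|)%N) :
  dist_Mk k f = eps <-> (min_vertex_cover k f)%:R = eps * #|T|%:R.
Proof.
have hn : (#|T|%:R : rat) != 0 by rewrite pnatr_eq0 -lt0n.
rewrite /dist_Mk key; split.
- by move=> <-; rewrite divfK.
- by move=> ->; rewrite mulfK.
Qed.
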